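(* Let $I$ be a nontrivial real interval and let $g\colon I^*\to I$ be a function. The following assertions are equivalent: (i) $g$ is associative (in the sense defined in the context); (ii) $g(\mathbf{x}\,g(\mathbf{y})\,\mathbf{z})=g(\mathbf{x}'\,g(\mathbf{y}')\,\mathbf{z}')$ for all strings $\mathbf{x},\mathbf{y},\mathbf{z},\mathbf{x}',\mathbf{y}',\mathbf{z}'\in I^*$ such that $\mathbf{x}\mathbf{y}\mathbf{z}=\mathbf{x}'\mathbf{y}'\mathbf{z}'$; (iii) $g(\mathbf{x}\,g(\mathbf{y})\,\mathbf{z})=g(\mathbf{x}\mathbf{y}\mathbf{z})$ for all $\mathbf{x},\mathbf{y},\mathbf{z}\in I^*$; (iv) $g(g(\mathbf{x})\,g(\mathbf{y}))=g(\mathbf{x}\mathbf{y})$ for all $\mathbf{x},\mathbf{y}\in I^*$.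
   Context: Tuples in $I^m$ are regarded as strings of length $m$ over $I$; $\varepsilon$ denotes the empty string, $I^0=\{\varepsilon\}$, and $I^*=\bigcup_{m\ge 0}I^m$, endowed with concatenation written by juxtaposition. For $g\colon I^*\to I$, $g_m$ denotes the restriction of $g$ to $I^m$, with the convention $g_0(\varepsilon)=\varepsilon$ (so that a $g(\varepsilon)$ appearing inside a string is the empty string). A binary function $h\colon I^2\to I$ is associative if $h(h(xy)z)=h(x\,h(yz))$ for all $x,y,z\in I$. A function $g\colon I^*\to I$ is called associative if (a) $g_2$ is associative; (b) for every $m>2$ and $x_1,\dots,x_m\in I$, $g_m(x_1\cdots x_m)=g_2(g_2(\cdots g_2(g_2(x_1x_2)x_3)\cdots)x_m)$; and (c) $g_1\circ g=g$ and $g(\mathbf{x}\,g_1(y)\,\mathbf{z})=g(\mathbf{x}y\mathbf{z})$ for all $\mathbf{x},\mathbf{z}\in I^*$, $y\in I$. *)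

(* Defs.v *)
From mathcomp Require Import all_boot all_order all_algebra.
From mathcomp Require Import reals.
Set Implicit Arguments. Unset Strict Implicit. Unset Printing Implicit Defensive.
Import Order.TTheory GRing.Theory Num.Theory.
Local Open Scope ring_scope.

Section Defs.
Variable R : realType.

Definition nontrivial_itv (I : interval R) : Prop :=
  exists a b : R, [/\ a \in I, b \in I & a < b].

Definition istr (I : interval R) (s : seq R) : bool := all (fun x => x \in I) s.

(* g : I^* -> I, represented as a function on seq R whose values on nonempty
   strings over I lie in I.  (Its value on the empty string is irrelevant:
   g(eps) is the empty string by convention, see [gstr].) *)
Definition maps_into (I : interval R) (g : seq R -> R) : Prop :=
  forall s, istr I s -> s != [::] -> g s \in I.

(* g(s) as a string: the empty string if s is empty (g_0(eps) = eps),
   otherwise the one-letter string g(s). *)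
Definition gstr (g : seq R -> R) (s : seq R) : seq R :=
  if s is [::] then [::] else [:: g s].

Definition assoc2 (I : interval R) (g : seq R -> R) : Prop :=
  forall x y z, x \in I -> y \in I -> z \in I ->
    g [:: g [:: x; y]; z] = g [:: x; g [:: y; z]].

(* associativity of g : I^* -> I as in the paper, conditions (a),(b),(c) *)
Definition assoc_fun (I : interval R) (g : seq R -> R) : Prop :=
  [/\ assoc2 I g,
      (forall x1 x2 s, istr I (x1 :: x2 :: s) -> (0 < size s)%N ->
         g (x1 :: x2 :: s) = foldl (fun a b => g [:: a; b]) (g [:: x1; x2]) s),
      (forall s, istr I s -> g (gstr g s) = g s) &
      (forall x y z, istr I x -> y \in I -> istr I z ->
         g (x ++ [:: g [:: y]] ++ z) = g (x ++ y :: z))].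
End Defs.

(* Main.v *)
Require Import Defs.
From mathcomp Require Import all_boot all_order all_algebra.
From mathcomp Require Import reals.
From mathcomp Require Import zify.
Local Open Scope ring_scope.

Definition hh {R : realType} (g : seq R -> R) a b := g [:: a; b].
Definition FF {R : realType} (g : seq R -> R) (s : seq R) :=
  if s is a :: s' then foldl (hh g) a s' else 0.

Section S.
Variables (R : realType) (I : interval R) (g : seq R -> R).
Hypothesis hg : maps_into I g.

Lemma h_in a b : a \in I -> b \in I -> hh g a b \in I.
Proof. by move=> ha hb; apply: hg => //=; rewrite /istr /= ha hb. Qed.

Lemma fold_in a t : a \in I -> istr I t -> foldl (hh g) a t \in I.
Proof.
elim: t a => //= b t IH a ha /andP[hb ht]; apply: IH => //; exact: h_in.
Qed.

Lemma fold_assoc (A : assoc2 I g) a b t : a \in I -> b \in I -> istr I t ->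
  foldl (hh g) (hh g a b) t = hh g a (foldl (hh g) b t).
Proof.
elim: t b => //= c t IH b ha hb /andP[hc ht].
have -> : hh g (hh g a b) c = hh g a (hh g b c) by apply: A.
by apply: IH => //; apply: h_in.
Qed.

Lemma F_in s : istr I s -> s != [::] -> FF g s \in I.
Proof. by case: s => //= a s /andP[ha hs] _; apply: fold_in. Qed.

Lemma gF (B : forall x1 x2 s, istr I (x1 :: x2 :: s) -> (0 < size s)%N ->
         g (x1 :: x2 :: s) = foldl (fun a b => g [:: a; b]) (g [:: x1; x2]) s)
  s : istr I s -> (1 < size s)%N -> g s = FF g s.
Proof.
case: s => [|x1 [|x2 s]] //= hs _.
case: s hs => [|x3 s] hs //=.
by rewrite B.
Qed.

Lemma F_key (A : assoc2 I g) x y z : istr I x -> istr I y -> istr I z ->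
  y != [::] -> FF g (x ++ FF g y :: z) = FF g (x ++ y ++ z).
Proof.
case: y => [|b y'] //= hx /andP[hb hy] hz _.
case: x hx => [|a x'] /= hx.
  by rewrite foldl_cat.
case/andP: hx => ha hx.
rewrite foldl_cat /= foldl_cat /= foldl_cat.
by rewrite [in RHS]fold_assoc //; apply: fold_in.
Qed.

Lemma istr_gstr y : istr I y -> istr I (gstr g y).
Proof. by case: y => [|a y] //= hy; rewrite /istr /= hg. Qed.

Lemma istr_cat x y : istr I (x ++ y) = istr I x && istr I y.
Proof. by rewrite /istr all_cat. Qed.

Definition P3 := forall x y z, istr I x -> istr I y -> istr I z ->
           g (x ++ gstr g y ++ z) = g (x ++ y ++ z).

Lemma i_iii : assoc_fun I g -> P3.
Proof.
case=> A B C1 C2 x y z hx hy hz.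
case: y hy => [|b y'] hy //.
case: y' hy => [|c y''] hy.
  by rewrite /= C2 //; case/andP: hy.
move: hy; rewrite [gstr _ _]/=.
move: (b :: c :: y'') (isT : (1 < size (b :: c :: y''))%N) => y hs hy.
have hy0 : y != [::] by case: y hs {hy}.
have gy : g y = FF g y by apply: gF.
have [/eqP|hxz] := posnP (size x + size z).
  rewrite addn_eq0 !size_eq0 => /andP[/eqP -> /eqP ->].
  rewrite cat0s cats0 /=.
  by case: y hs hy {hy0 gy} => // a s _ hy; rewrite cats0; exact: (C1 _ hy).
have hFy : FF g y \in I by apply: F_in.
have e1 : g (x ++ [:: g y] ++ z) = FF g (x ++ [:: FF g y] ++ z).
  rewrite gy; apply: gF => //.
    by rewrite !istr_cat hx hz /istr /= hFy.
  rewrite !size_cat /=; move: hxz; lia.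
have e2 : g (x ++ y ++ z) = FF g (x ++ y ++ z).
  apply: gF => //.
    by rewrite !istr_cat hx hy hz.
  rewrite !size_cat; move: hxz hs; lia.
by rewrite e1 e2 -F_key.
Qed.

Lemma iii_i : P3 -> assoc_fun I g.
Proof.
move=> H; split.
- move=> x y z hx hy hz.
  have i2 : istr I [:: x; y] by rewrite /istr /= hx hy.
  have i2' : istr I [:: y; z] by rewrite /istr /= hy hz.
  have i1 : istr I [:: x] by rewrite /istr /= hx.
  have i1' : istr I [:: z] by rewrite /istr /= hz.
  have e1 := H [::] [:: x; y] [:: z] isT i2 i1'.
  have e2 := H [:: x] [:: y; z] [::] i1 i2' isT.
  rewrite /= in e1 e2.
  by rewrite e1 e2.
- move=> x1 x2 s hs _.
  elim/last_ind: s hs => [|s b IH] hs //.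
  move: hs; rewrite -cats1 -!cat_cons istr_cat => /andP[hs hb].
  rewrite foldl_cat /= -IH //.
  have e := H [::] (x1 :: x2 :: s) [:: b] isT hs hb.
  rewrite /= in e *; by rewrite e.
- move=> s hs; have := H [::] s [::]; rewrite /= !cats0; exact.
- move=> x y z hx hy hz; have := H x [:: y] z; rewrite /=; apply => //.
  by rewrite /istr /= hy.
Qed.

Lemma ii_iii : (forall x y z x' y' z', istr I x -> istr I y -> istr I z ->
           istr I x' -> istr I y' -> istr I z' ->
           x ++ y ++ z = x' ++ y' ++ z' ->
           g (x ++ gstr g y ++ z) = g (x' ++ gstr g y' ++ z')) <-> P3.
Proof.
split.
- move=> H x y z hx hy hz.
  rewrite (H x y z (x ++ y) [::] z) //=; last by rewrite catA.
  + by rewrite catA.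
  + by rewrite istr_cat hx hy.
- move=> H x y z x' y' z' hx hy hz hx' hy' hz' E.
  by rewrite !H // E.
Qed.

Lemma gstr_ne s : s != [::] -> gstr g s = [:: g s].
Proof. by case: s. Qed.

Lemma iv_iii : (forall x y, istr I x -> istr I y ->
           g (gstr g x ++ gstr g y) = g (x ++ y)) <-> P3.
Proof.
split.
- move=> H.
  have H0 : forall s, istr I s -> g (gstr g s) = g s.
    by move=> s hs; have := H s [::] hs isT; rewrite /= !cats0.
  have H1 : forall x y, istr I x -> istr I y -> y != [::] ->
      g (x ++ gstr g y) = g (x ++ y).
    move=> x y hx hy yn.
    have ggy : gstr g (gstr g y) = gstr g y.
      by rewrite (gstr_ne _ yn) /=; congr [:: _]; rewrite -(gstr_ne _ yn); exact: H0.
    have e1 := H x (gstr g y) hx (istr_gstr _ hy).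
    by rewrite -e1 ggy H.
  move=> x y z hx hy hz.
  case: (eqVneq y [::]) => [-> //|yn].
  have hgy := istr_gstr _ hy.
  have e1 := H (x ++ gstr g y) z.
  have e2 := H (x ++ y) z.
  rewrite -!catA in e1 e2.
  rewrite -e1 ?istr_cat ?hx ?hgy // -e2 ?istr_cat ?hx ?hy //.
  have n1 : x ++ gstr g y != [::].
    by rewrite -size_eq0 size_cat (gstr_ne _ yn) /= addn1.
  have n2 : x ++ y != [::].
    by rewrite -size_eq0 size_cat; case: y yn {hy hgy e1 e2 H1 n1} => // ? ? _; rewrite addnS.
  by rewrite (gstr_ne _ n1) (gstr_ne _ n2) (H1 x y).
- move=> H x y hx hy.
  have e1 := H (gstr g x) y [::] (istr_gstr _ hx) hy isT.
  have e2 := H [::] x y isT hx hy.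
  rewrite !cats0 in e1; rewrite /= in e2.
  by rewrite e1 e2.
Qed.

End S.

Theorem proposition2p2 (R : realType) (I : interval R) (g : seq R -> R) :
  nontrivial_itv I -> maps_into I g ->
  [/\ (assoc_fun I g <->
        (forall x y z x' y' z', istr I x -> istr I y -> istr I z ->
           istr I x' -> istr I y' -> istr I z' ->
           x ++ y ++ z = x' ++ y' ++ z' ->
           g (x ++ gstr g y ++ z) = g (x' ++ gstr g y' ++ z'))),
      (assoc_fun I g <->
        (forall x y z, istr I x -> istr I y -> istr I z ->
           g (x ++ gstr g y ++ z) = g (x ++ y ++ z))) &
      (assoc_fun I g <->
        (forall x y, istr I x -> istr I y ->
           g (gstr g x ++ gstr g y) = g (x ++ y)))].
Proof.
move=> _ hg.
have E : assoc_fun I g <-> @P3 R I g.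
  by split; [apply: i_iii | apply: iii_i].
split.
- exact: (iff_trans E (iff_sym (@ii_iii R I g))).
- exact: E.
- exact: (iff_trans E (iff_sym (@iv_iii R I g hg))).
Qed.
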